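(* Let $\gamma=(\gamma_1,\dots,\gamma_b)$ be a parallel map on $V=V_1\oplus\cdots\oplus V_b$, $V_i\cong(\mathbb F_2)^m$, with $0\gamma=0$. Suppose every $\gamma_i$ is differentially $2^r$-uniform with $r<m-1$ and strongly $r$-anti-invariant. If $\gamma$ maps $\mathcal{LA}_U(W_1|W_2)$ onto a non-trivial partition $\mathcal L(W)$, then $W_1$, $W_2$, $W$ are walls and $W_1=W_2=W$; in particular $\mathcal{LA}_U(W_1|W_2)$ is linear.
   Context: Let $m,b>1$, $n=mb$, $V=(\mathbb F_2)^n=V_1\oplus\cdots\oplus V_b$, $V_i\cong(\mathbb F_2)^m$. Permutations act on the right. A parallel map is $\gamma\in\mathrm{Sym}(V)$ with $(v_1\oplus\cdots\oplus v_b)\gamma=v_1\gamma_1\oplus\cdots\oplus v_b\gamma_b$, $\gamma_i\in\mathrm{Sym}(V_i)$. A wall is $\bigoplus_{i\in I}V_i$ with $\emptyset\ne I\subsetneq\{1,\dots,b\}$. $f:(\mathbb F_2)^m\to(\mathbb F_2)^m$ is differentially $\delta$-uniform if $\delta=\max_{a\ne0,b}|\{x:f(x+a)+f(x)=b\}|$; for $f(0)=0$ and $1\le r<m$, $f$ is strongly $r$-anti-invariant if for all subspaces $U',W'$ with $f(U')=W'$, either $\dim U'=\dim W'<m-r$ or $U'=W'=(\mathbb F_2)^m$. A permutation maps $\mathcal A$ onto $\mathcal B$ if it sends the blocks of $\mathcal A$ exactly onto those of $\mathcal B$; trivial partitions are the singleton partition and $\{V\}$. $\mathcal L(W)=\{W+v:v\in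 V\}$. For a subspace $U$ of dimension $n-1$ and subspaces $W_1,W_2\subseteq U$, $\mathcal{LA}_U(W_1|W_2)=\{W_1+v:v\in U\}\cup\{(W_2+\bar v)+v:v\in U\}$ for any $\bar v\in V\setminus U$. *)

(* Defs.v *)
From HB Require Import structures.
From mathcomp Require Import all_boot all_order all_algebra all_fingroup.
Set Implicit Arguments. Unset Strict Implicit. Unset Printing Implicit Defensive.
Import GRing.Theory.
Local Open Scope ring_scope.

Notation F2 := 'F_2.
Notation Blk m := 'rV[F2]_m.

(* V = V_1 (+) ... (+) V_b, realized as functions 'I_b -> (F_2)^m;
   this is an F_2-vector space of dimension m*b. *)
Notation Vsp m b := {ffun 'I_b -> Blk m}.

Definition parallel (m b : nat) (g : 'I_b -> {perm Blk m}) (v : Vsp m b) : Vsp m b :=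
  [ffun i => g i (v i)].

Definition diff_unif (m : nat) (f : Blk m -> Blk m) : nat :=
  \max_(a : Blk m | a != 0) \max_(c : Blk m) #|[set x | (f (x + a) + f x == c)%R]|.

Definition diff_uniform (m : nat) (f : Blk m -> Blk m) (delta : nat) : Prop :=
  diff_unif f = delta.

Definition strongly_anti_invariant (m r : nat) (f : Blk m -> Blk m) : Prop :=
  f 0 = 0 /\
  forall U' W' : {vspace Blk m},
    [set f x | x in [set y | y \in U']] = [set y | y \in W'] ->
    (\dim U' = \dim W' /\ (\dim U' < m - r)%N) \/ (U' = fullv /\ W' = fullv).

Definition vcoset (m b : nat) (W : {vspace Vsp m b}) (v : Vsp m b) : {set Vsp m b} :=
  [set w + v | w : Vsp m b in [set y | y \in W]].

Definition Lpart (m b : nat) (W : {vspace Vsp m b}) : {set {set Vsp m b}} :=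
  [set vcoset W v | v in [set: Vsp m b]].

(* LA_U(W1|W2) = {W1 + v : v in U} u {(W2 + vbar) + v : v in U}, vbar not in U *)
Definition LApart (m b : nat) (U W1 W2 : {vspace Vsp m b}) (vbar : Vsp m b)
  : {set {set Vsp m b}} :=
  [set vcoset W1 v | v in [set y | y \in U]] :|:
  [set vcoset W2 (vbar + v) | v in [set y | y \in U]].

Definition singleton_part (T : finType) : {set {set T}} := [set [set v] | v in [set: T]].
Definition full_part (T : finType) : {set {set T}} := [set [set: T]].

Definition maps_onto (T : finType) (f : T -> T) (A B : {set {set T}}) : Prop :=
  [set f @: X | X : {set T} in A] = B.

(* walls: (+)_{i in I} V_i with I nonempty and proper *)
Definition wall (m b : nat) (W : {vspace Vsp m b}) : Prop :=
  exists I : {set 'I_b}, [/\ I != set0, I != setT &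
    forall v : Vsp m b, v \in W <-> (forall i, i \notin I -> v i = 0)].

(* Main.v *)
Require Import Defs.
From HB Require Import structures.
From mathcomp Require Import all_boot all_order all_algebra all_fingroup all_field.
Import GRing.Theory.
Local Open Scope ring_scope.
Set Implicit Arguments. Unset Strict Implicit. Unset Printing Implicit Defensive.

Lemma dimV m b : \dim (fullv : {vspace Vsp m b}) = (m * b)%N.
Proof. by rewrite dimvf /= /dim /= card_ord dim_matrix /= mul1r mulnC. Qed.

Lemma F2cases (k : F2) : k = 0 \/ k = 1.
Proof.
case: k => [[|[|n]]] Hk; [left|right|]; try exact/val_inj.
have e : pdiv 2 = 2%N by []. move: Hk; rewrite e. done.
Qed.

Lemma F2xx (k : F2) : k + k = 0.
Proof. by case: (F2cases k) => ->; [rewrite addr0 | apply/val_inj]. Qed.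

Lemma blk_xx m (x : Blk m) : x + x = 0.
Proof. by apply/rowP => j; rewrite !mxE F2xx. Qed.

Lemma blk_opp m (x : Blk m) : - x = x.
Proof. by apply/esym/eqP; rewrite -addr_eq0 blk_xx. Qed.

Lemma vsp_opp m b (x : Vsp m b) : - x = x.
Proof. by apply/ffunP => i; rewrite ffunE blk_opp. Qed.

Lemma card_blk m : #|{: Blk m}| = (2 ^ m)%N.
Proof. by rewrite card_mx card_Fp // mul1n. Qed.

Definition ei m b (i : 'I_b) (y : Blk m) : Vsp m b :=
  [ffun j => if j == i then y else 0].

Fact ei_semilinear m b i : semilinear (@ei m b i).
Proof.
split=> [k y|y z]; apply/ffunP => j; rewrite !ffunE; case: (j == i) => //.
- by rewrite scaler0.
- by rewrite addr0.
Qed.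

HB.instance Definition _ m b i := GRing.isSemilinear.Build F2 (Blk m) (Vsp m b) _ (@ei m b i)
  (@ei_semilinear m b i).

Definition Lsub m b (W : {vspace Vsp m b}) i : {vspace Blk m} :=
  (linfun (@ei m b i) @^-1: W)%VS.

Lemma memLsub m b (W : {vspace Vsp m b}) i y : (y \in Lsub W i) = (ei i y \in W).
Proof. by rewrite /Lsub -memv_preim lfunE. Qed.

Lemma ei_inj m b i : injective (@ei m b i).
Proof. by move=> y z /ffunP/(_ i); rewrite !ffunE eqxx. Qed.

Lemma mem_vcoset m b (W : {vspace Vsp m b}) v y : (y \in vcoset W v) = (y - v \in W).
Proof.
apply/imsetP/idP => [[w]|H].
  by rewrite inE => Hw ->; rewrite addrK.
by exists (y - v); rewrite ?inE ?subrK.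
Qed.

Lemma card_vcoset m b (W : {vspace Vsp m b}) v : #|vcoset W v| = #|[set y | y \in W]|.
Proof. by rewrite card_imset //; apply: addIr. Qed.

Lemma dbound m (f : Blk m -> Blk m) (a c : Blk m) : a != 0 ->
  (#|[set x | (f (x + a) + f x == c)%R]| <= diff_unif f)%N.
Proof.
move=> Ha; rewrite /diff_unif.
by rewrite (bigD1 a) //= (bigD1 c) //= !leq_max leqnn.
Qed.

Lemma hyper m b (U : {vspace Vsp m b}) x y : \dim U = (m * b).-1 -> (0 < m * b)%N ->
  x \notin U -> y \notin U -> y - x \in U.
Proof.
move=> dU mb xU yU.
have sub : (U <= U + <[x]>)%VS := addvSl U <[x]>.
have xin : x \in (U + <[x]>)%VS by move: (memv_add (mem0v U) (memv_line x)); rewrite add0r.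
have ne : U != (U + <[x]>)%VS by apply: contraNneq xU => ->.
have ltU : (\dim U < \dim (U + <[x]>))%N.
  by have [le eqC] := dimv_leqif_eq sub; rewrite ltn_neqAle le andbT eqC.
have full : (U + <[x]>)%VS = fullv.
  apply/eqP; rewrite eqEdim subvf dimV /=.
  by move: ltU; rewrite dU; case: (m * b)%N mb.
have : y \in (U + <[x]>)%VS by rewrite full memvf.
case/memv_addP => u Hu [v /vlineP [k ->] yE]; move: yU; rewrite yE.
case: (F2cases k) => ->.
  by rewrite scale0r addr0 Hu.
by rewrite scale1r addrK.
Qed.

From mathcomp Require Import zify.

Lemma cardT m b (U : {vspace Vsp m b}) i :
  (forall x y, x \notin U -> y \notin U -> y - x \in U) -> (0 < m)%N ->
  (2 ^ m.-1 <= #|[set t : Blk m | ei i t \in U]|)%N.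
Proof.
move=> hyp m0; set T := [set t : Blk m | ei i t \in U].
have C : (#|~: T| <= #|T|)%N.
  case: (set_0Vmem (~: T)) => [-> | [t0 Ht0]]; first by rewrite cards0.
  rewrite -(card_imset _ (addIr (- t0))).
  apply: subset_leq_card; apply/subsetP => z /imsetP [t Ht ->].
  move: Ht Ht0; rewrite !inE raddfB => Ht Ht0.
  exact: hyp.
have := cardsC T; rewrite card_blk => E.
have e2 : (2 ^ m = 2 * 2 ^ m.-1)%N by rewrite -expnS prednK.
lia.
Qed.

Lemma count_bound m (f : Blk m -> Blk m) (a : Blk m) (T L : {set Blk m}) (r : nat) :
  a != 0 -> diff_unif f = (2 ^ r)%N ->
  (forall t, t \in T -> f (t + a) + f t \in L) -> (#|T| <= #|L| * 2 ^ r)%N.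
Proof.
move=> Ha Hd HT.
rewrite -sum1_card (partition_big (fun t => f (t + a) + f t) (mem L)) //=.
rewrite -sum_nat_const; apply: leq_sum => c Hc.
rewrite (eq_bigl (fun t => t \in [set t in T | f (t + a) + f t == c])); last first.
  by move=> t; rewrite inE.
rewrite sum1_card -Hd; apply: leq_trans (dbound f c Ha).
apply: subset_leq_card; apply/subsetP => t; rewrite !inE; case/andP => _ ->.
done.
Qed.

Unset Implicit Arguments.

Theorem lemma3p10 (m b r : nat) (g : 'I_b -> {perm Blk m})
    (U W1 W2 W : {vspace Vsp m b}) (vbar : Vsp m b) :
  (1 < m)%N -> (1 < b)%N ->
  (0 < r)%N -> (r < m.-1)%N ->
  (forall i, diff_uniform (g i) (2 ^ r)) ->
  (forall i, strongly_anti_invariant r (g i)) ->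
  \dim U = (m * b).-1 ->
  (W1 <= U)%VS -> (W2 <= U)%VS ->
  vbar \notin U ->
  Lpart W != singleton_part (Vsp m b) ->
  Lpart W != full_part (Vsp m b) ->
  maps_onto (parallel g) (LApart U W1 W2 vbar) (Lpart W) ->
  [/\ wall W1, wall W2, wall W, W1 = W2 & W2 = W] /\
  LApart U W1 W2 vbar = Lpart W1.
Proof.
move=> m1 b1 r0 rm DU AI dimU sW1 sW2 vbarU nsing nfull MO.
set F := parallel g.
have g0 i : g i 0 = 0 by case: (AI i).
have F0 : F 0 = 0 by apply/ffunP => j; rewrite !ffunE g0.
have Finj : injective F.
  move=> v w /ffunP E; apply/ffunP => j; move: (E j); rewrite !ffunE; exact: perm_inj.
have Fei i y : F (ei i y) = ei i (g i y).
  apply/ffunP => j; rewrite !ffunE; case: (j =P i) => [->|_] //.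
have mb0 : (0 < m * b)%N by rewrite muln_gt0; apply/andP; split; apply: ltnW.
have hyp x y : x \notin U -> y \notin U -> y - x \in U by apply: hyper.
have blk X : X \in LApart U W1 W2 vbar -> exists v, F @: X = vcoset W v.
  move=> HX; have : F @: X \in Lpart W by rewrite -MO; apply/imsetP; exists X.
  by case/imsetP => v _ ->; exists v.
have D1 x w : x \in U -> w \in W1 -> F (w + x) - F x \in W.
  move=> xU wW.
  have [v Ev] : exists v, F @: (vcoset W1 x) = vcoset W v.
    apply: blk; rewrite inE; apply/orP; left; apply/imsetP; by exists x; rewrite ?inE.
  have h1 : F x \in vcoset W v by rewrite -Ev; apply: imset_f; rewrite mem_vcoset subrr mem0v.
  have h2 : F (w + x) \in vcoset W v by rewrite -Ev; apply: imset_f; rewrite mem_vcoset addrK.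
  rewrite mem_vcoset in h1; rewrite mem_vcoset in h2.
  by have := memvB h2 h1; rewrite opprB addrA subrK.
have D2 w : w \in W2 -> F (w + vbar) - F vbar \in W.
  move=> wW.
  have [v Ev] : exists v, F @: (vcoset W2 (vbar + 0)) = vcoset W v.
    apply: blk; rewrite inE; apply/orP; right; apply/imsetP; by exists 0; rewrite ?inE ?mem0v.
  rewrite addr0 in Ev.
  have h1 : F vbar \in vcoset W v by rewrite -Ev; apply: imset_f; rewrite mem_vcoset subrr mem0v.
  have h2 : F (w + vbar) \in vcoset W v by rewrite -Ev; apply: imset_f; rewrite mem_vcoset addrK.
  rewrite mem_vcoset in h1; rewrite mem_vcoset in h2.
  by have := memvB h2 h1; rewrite opprB addrA subrK.
have C1 : F @: [set y | y \in W1] = [set y | y \in W].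
  have [v Ev] : exists v, F @: (vcoset W1 0) = vcoset W v.
    apply: blk; rewrite inE; apply/orP; left; apply/imsetP; by exists 0; rewrite ?inE ?mem0v.
  have e1 : vcoset W1 0 = [set y | y \in W1] by apply/setP => y; rewrite mem_vcoset subr0 inE.
  have h0 : 0 \in vcoset W v by rewrite -Ev -{1}F0; apply: imset_f; rewrite mem_vcoset subrr mem0v.
  rewrite mem_vcoset sub0r rpredN in h0.
  by rewrite -e1 Ev; apply/setP => y; rewrite mem_vcoset inE rpredBr.
have C2 : #|[set y | y \in W2]| = #|[set y | y \in W]|.
  have [v Ev] : exists v, F @: (vcoset W2 (vbar + 0)) = vcoset W v.
    apply: blk; rewrite inE; apply/orP; right; apply/imsetP; by exists 0; rewrite ?inE ?mem0v.
  rewrite addr0 in Ev.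
  by rewrite -(card_vcoset W2 vbar) -(card_imset _ Finj) Ev card_vcoset.
have memC1 u : u \in W -> exists2 w, w \in W1 & u = F w.
  move=> uW; have : u \in F @: [set y | y \in W1] by rewrite C1 inE.
  by case/imsetP => w; rewrite inE => ? ->; exists w.
have FW1 w : w \in W1 -> F w \in W.
  move=> wW; have : F w \in F @: [set y | y \in W1] by apply: imset_f; rewrite inE.
  by rewrite C1 inE.
have KL i : [set g i x | x in [set y | y \in Lsub W1 i]] = [set y | y \in Lsub W i].
  apply/setP => y; rewrite inE; apply/imsetP/idP.
    by case=> x; rewrite inE memLsub => Hx ->; rewrite memLsub -Fei FW1.
  rewrite memLsub => Hy; case: (memC1 _ Hy) => w Hw Ew.
  exists ((g i)^-1 y)%g; last by rewrite permKV.
  rewrite inE memLsub.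
  have -> : ei i ((g i)^-1 y)%g = w by apply: Finj; rewrite Fei permKV -Ew.
  done.
have cT i := @cardT _ _ U i hyp (ltnW m1).
have big i : (exists2 y, y != 0 & ei i y \in W) -> Lsub W i = fullv.
  case=> y0 y0n y0W.
  have : y0 \in [set g i x | x in [set y | y \in Lsub W1 i]] by rewrite KL inE memLsub.
  case/imsetP => a; rewrite inE memLsub => aW1 Ey0.
  have an : a != 0 by apply: contraNneq y0n => a0; rewrite Ey0 a0 g0.
  set T := [set t : Blk m | ei i t \in U].
  set Lnz := [set y | (y \in Lsub W i) && (y != 0)].
  have HT t : t \in T -> g i (t + a) + g i t \in Lnz.
    rewrite inE => tU; rewrite inE memLsub; apply/andP; split.
      have := D1 (ei i t) (ei i a) tU aW1.
      by rewrite -raddfD !Fei -raddfB blk_opp (addrC a t).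
    apply/eqP => E; move/eqP: E; rewrite addr_eq0 blk_opp => /eqP /perm_inj /eqP.
    rewrite -{2}[t]addr0 => /eqP /addrI a0; by rewrite a0 eqxx in an.
  have cb := count_bound an (DU i) HT.
  have Lc : (#|Lnz| < #|[set y | y \in Lsub W i]|)%N.
    apply: proper_card; apply/properP; split.
      by apply/subsetP => y; rewrite !inE => /andP [].
    by exists 0; rewrite !inE ?mem0v ?eqxx.
  have cL : #|[set y | y \in Lsub W i]| = (2 ^ \dim (Lsub W i))%N by rewrite cardsE card_vspace card_Fp.
  rewrite cL in Lc.
  have lt2 : (2 ^ m.-1 < 2 ^ (\dim (Lsub W i) + r))%N.
    rewrite expnD; apply: (leq_ltn_trans (cT i)); apply: (leq_ltn_trans cb).
    by rewrite ltn_pmul2r ?expn_gt0.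
  rewrite ltn_exp2l // in lt2.
  case: (AI i) => _ /(_ (Lsub W1 i) (Lsub W i) (KL i)) [[e dl] | [_ ->]] //.
  exfalso; rewrite e in dl; lia.
have small i w : w \in W1 -> w i != 0 -> exists2 y, y != 0 & ei i y \in W.
  move=> wW wi.
  case: (boolP [exists y, (y != 0) && (ei i y \in W)]) => [/existsP [y /andP [? ?]] | /existsPn Hn].
    by exists y.
  have z y : ei i y \in W -> y = 0.
    by move=> Hy; apply/eqP; move: (Hn y); rewrite Hy andbT negbK.
  set T := [set t : Blk m | ei i t \in U].
  have HT : T \subset [set x | g i (x + w i) + g i x == g i (w i)].
    apply/subsetP => t; rewrite !inE => tU.
    have h3 := memvB (D1 (ei i t) w tU wW) (FW1 w wW).
    have e : F (w + ei i t) - F (ei i t) - F w = ei i (g i (w i + t) - g i t - g i (w i)).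
      apply/ffunP => j; rewrite !ffunE; case: (j =P i) => [->|_]; first by rewrite ?eqxx.
      by rewrite addr0 g0 subr0 subrr.
    rewrite e in h3; move/z: h3 => /eqP.
    by rewrite subr_eq0 blk_opp (addrC (w i) t).
  have := subset_leq_card HT.
  have := dbound (g i) (g i (w i)) wi; rewrite (DU i) => d1 d2.
  have := leq_trans (cT i) (leq_trans d2 d1).
  by rewrite leq_exp2l // leqNgt rm.
set I := [set i | [forall y, ei i y \in W]].
have inI i y : i \in I -> ei i y \in W by rewrite inE => /forallP.
have W1I i w : i \notin I -> w \in W1 -> w i = 0.
  move=> iI wW; apply/eqP; apply: contraNT iI => wi.
  have Lf := big i (small i w wW wi).
  by rewrite inE; apply/forallP => y; rewrite -memLsub Lf memvf.
have WI i u : i \notin I -> u \in W -> u i = 0.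
  move=> iI uW; case: (memC1 u uW) => w wW ->.
  by rewrite ffunE (W1I i w iI wW) g0.
have W2I i w : i \notin I -> w \in W2 -> w i = 0.
  move=> iI wW; have := WI i _ iI (D2 w wW).
  rewrite !ffunE => /eqP; rewrite subr_eq0 => /eqP /perm_inj.
  by rewrite -{2}[vbar i]add0r => /addIr.
set S := [set v : Vsp m b | [forall i, (i \notin I) ==> (v i == 0)]].
have decomp (v : Vsp m b) : v = \sum_i ei i (v i).
  apply/ffunP => j; rewrite sum_ffunE (bigD1 j) //= ffunE eqxx big1 ?addr0 //.
  by move=> k kj; rewrite ffunE eq_sym (negbTE kj).
have WS v : (v \in W) = (v \in S).
  apply/idP/idP => [vW | ].
    by rewrite inE; apply/forallP => i; apply/implyP => iI; rewrite (WI i v iI vW).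
  rewrite inE => /forallP Hv; rewrite (decomp v); apply: rpred_sum => i _.
  case: (boolP (i \in I)) => iI; first exact: inI.
  by move/implyP: (Hv i) => /(_ iI) /eqP ->; rewrite raddf0 mem0v.
have eWS : [set y | y \in W] = S by apply/setP => y; rewrite inE WS.
have W1S v : (v \in W1) = (v \in S).
  have -> : S = [set y | y \in W1]; last by rewrite inE.
  apply/esym/eqP; rewrite eqEcard; apply/andP; split.
    apply/subsetP => y; rewrite !inE => yW; apply/forallP => i; apply/implyP => iI.
    by rewrite (W1I i y iI yW).
  by rewrite -eWS -C1 card_imset.
have W2S v : (v \in W2) = (v \in S).
  have -> : S = [set y | y \in W2]; last by rewrite inE.
  apply/esym/eqP; rewrite eqEcard; apply/andP; split.
    apply/subsetP => y; rewrite !inE => yW; apply/forallP => i; apply/implyP => iI.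
    by rewrite (W2I i y iI yW).
  by rewrite -eWS C2.
have e1 : W1 = W by apply/vspaceP => v; rewrite W1S WS.
have e2 : W2 = W by apply/vspaceP => v; rewrite W2S WS.
have WSI v : (v \in W) <-> (forall i, i \notin I -> v i = 0).
  rewrite WS inE; split => [/forallP H i iI | H].
    by move/implyP: (H i) => /(_ iI) /eqP.
  by apply/forallP => i; apply/implyP => iI; rewrite H.
have I0 : I != set0.
  apply: contra nsing => /eqP I0; apply/eqP; rewrite /Lpart /singleton_part.
  apply: eq_imset => v; apply/setP => y; rewrite mem_vcoset in_set1.
  apply/idP/eqP => [H | ->]; last by rewrite subrr mem0v.
  apply/eqP; rewrite -subr_eq0; apply/eqP/ffunP => i.
  have := (WSI _).1 H i; rewrite I0 inE => /(_ isT).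
  by rewrite !ffunE.
have IT : I != setT.
  apply: contra nfull => /eqP IT; apply/eqP; rewrite /Lpart /full_part.
  have allW v : v \in W by apply/(WSI v).2 => i; rewrite IT inE.
  apply/setP => X; rewrite in_set1; apply/imsetP/eqP => [[v _ ->] | ->].
    by apply/setP => y; rewrite mem_vcoset inE allW.
  by exists 0; rewrite ?inE //; apply/setP => y; rewrite mem_vcoset inE allW.
have wW : wall W by exists I; split.
split; first by rewrite e1 e2; split.
rewrite e1 e2; apply/setP => X; apply/idP/idP.
  by rewrite inE => /orP [] /imsetP [v _ ->]; apply/imsetP; eexists; rewrite ?inE.
case/imsetP => v _ ->; rewrite inE; case: (boolP (v \in U)) => vU.
  by apply/orP; left; apply/imsetP; exists v; rewrite ?inE.
apply/orP; right; apply/imsetP; exists (v - vbar); first by rewrite inE hyp.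
by rewrite addrC subrK.
Qed.
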